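(* Let $m,m_P,m_W$ be positive integers and let $\eta^\infty=(\eta^\infty_{s,(x,\mu)})$ be a left stochastic matrix (nonnegative entries, each column summing to $1$) with row index $s\in\{1,\dots,m\}$ and column index $(x,\mu)\in\{-1,1\}^{m_W}\times\{0,1,\dots,m_P\}$, $x=(x_1,\dots,x_{m_W})$. Define the partition \[ S^P=\Big\{s:\sum_{x\in\{-1,1\}^{m_W}}\eta^\infty_{s,(x,0)}=0\Big\},\qquad S^W=\Big\{s:\sum_{x\in\{-1,1\}^{m_W}}\eta^\infty_{s,(x,0)}>0\Big\} \] of $\{1,\dots,m\}$. Then: (i) the numbers $\overline{\eta}_{s,\mu}=2^{-m_W}\sum_x\eta^\infty_{s,(x,\mu)}$, $(s,\mu)\in S^P\times\{1,\dots,m_P\}$, satisfy $0\le\overline{\eta}_{s,\mu}\le1$ for all such $(s,\mu)$ and $\sum_{s\in S^P}\overline{\eta}_{s,\mu}\le1$ for all $\mu\in\{1,\dots,m_P\}$; (ii) the singular values of the real matrix $E$ with entries \[ E_{s,\nu}=2^{-m_W/2}\,\frac{\sum_x x_{\nu-m_P}\,\eta^\infty_{s,(x,0)}}{\sqrt{\sum_x\eta^\infty_{s,(x,0)}}},\qquad (s,\nu)\in S^W\times\{m_P+1,\dots,m_P+m_W\}, \] all belong to $[0,1]$. *)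

(* Defs.v *)
From HB Require Import structures.
From mathcomp Require Import all_boot all_order all_algebra.
Set Implicit Arguments. Unset Strict Implicit. Unset Printing Implicit Defensive.
Import Order.TTheory GRing.Theory Num.Theory.
Local Open Scope ring_scope.

Section Defs.
Variable R : rcfType.

Definition pm1 (b : bool) : R := if b then 1 else -1.

Definition left_stochastic (m : nat) (C : finType) (eta : 'I_m -> C -> R) : Prop :=
  (forall s c, 0 <= eta s c) /\ (forall c, \sum_(s < m) eta s c = 1).

Variables (m mP mW : nat).
Notation colT := ({ffun 'I_mW -> bool} * 'I_mP.+1)%type.

Definition SP (eta : 'I_m -> colT -> R) : {set 'I_m} :=
  [set s | \sum_(x : {ffun 'I_mW -> bool}) eta s (x, ord0) == 0].
Definition SW (eta : 'I_m -> colT -> R) : {set 'I_m} :=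
  [set s | 0 < \sum_(x : {ffun 'I_mW -> bool}) eta s (x, ord0)].

Definition etabar (eta : 'I_m -> colT -> R) (s : 'I_m) (mu : 'I_mP.+1) : R :=
  (2 ^+ mW)^-1 * \sum_(x : {ffun 'I_mW -> bool}) eta s (x, mu).

(* The matrix E, rows indexed by S^W (enumerated), column j : 'I_mW standing
   for nu = mP + 1 + j, so that x_{nu - mP} = x j. *)
Definition Emx (eta : 'I_m -> colT -> R) : 'M[R]_(#|SW eta|, mW) :=
  \matrix_(i, j)
    let s := enum_val i in
    (Num.sqrt (2 ^+ mW))^-1 *
      (\sum_(x : {ffun 'I_mW -> bool}) pm1 (x j) * eta s (x, ord0)) /
      Num.sqrt (\sum_(x : {ffun 'I_mW -> bool}) eta s (x, ord0)).
End Defs.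

Definition singular_value (R : rcfType) (p q : nat) (A : 'M[R]_(p, q)) (sigma : R) : Prop :=
  0 <= sigma /\ eigenvalue (A^T *m A) (sigma ^+ 2).

(* Main.v *)
Require Import Defs.
From HB Require Import structures.
From mathcomp Require Import all_boot all_order all_algebra.
From mathcomp Require Import ring lra.
Import Order.TTheory GRing.Theory Num.Theory.
Local Open Scope ring_scope.

Section H.
Variable R : rcfType.

Lemma cs_weighted (I : finType) (a b : I -> R) :
  (forall i, 0 <= a i) -> 0 < \sum_i a i ->
  (\sum_i a i * b i) ^+ 2 / (\sum_i a i) <= \sum_i a i * b i ^+ 2.
Proof.
move=> a0 Apos.
set A := \sum_i a i; set B := \sum_i a i * b i; set C := \sum_i a i * b i ^+ 2.
set t := B / A.
have H : 0 <= \sum_i a i * (b i - t) ^+ 2.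
  by apply: sumr_ge0 => i _; apply: mulr_ge0 => //; apply: sqr_ge0.
have E : \sum_i a i * (b i - t) ^+ 2 = C - t * B *+ 2 + t ^+ 2 * A.
  transitivity (\sum_i (a i * b i ^+ 2 - (t * (a i * b i)) *+ 2 + t ^+ 2 * a i)).
    by apply: eq_bigr => i _; ring.
  by rewrite big_split sumrB /= sumrMnl -!mulr_sumr.
rewrite E in H.
have ->: B ^+ 2 / A = t * B *+ 2 - t ^+ 2 * A.
  rewrite /t; field; exact: lt0r_neq0.
lra.
Qed.

Lemma pm1_neg (b : bool) : pm1 R (~~ b) = - pm1 R b.
Proof. by case: b => /=; rewrite ?opprK. Qed.

Lemma pm1_sq (b : bool) : pm1 R b * pm1 R b = 1.
Proof. by case: b => /=; rewrite ?mulrNN mulr1. Qed.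

Lemma orth (n : nat) (j k : 'I_n) :
  \sum_(x : {ffun 'I_n -> bool}) pm1 R (x j) * pm1 R (x k) =
  (j == k)%:R * 2 ^+ n.
Proof.
case: (eqVneq j k) => [->|njk].
  under eq_bigr do rewrite pm1_sq.
  by rewrite ?eqxx sumr_const card_ffun card_bool card_ord mul1r natrX.
rewrite mul0r.
set S := (X in X = 0).
pose fl (x : {ffun 'I_n -> bool}) : {ffun 'I_n -> bool} :=
  [ffun i => if i == j then ~~ x i else x i].
have flK : involutive fl.
  by move=> x; apply/ffunP => i; rewrite !ffunE; case: (i == j) => //; rewrite negbK.
have : S = - S.
  rewrite {1}/S (reindex_inj (inv_inj flK)) /S -sumrN; apply: eq_bigr => x _.
  rewrite !ffunE eqxx eq_sym (negbTE njk) pm1_neg mulNr //.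
move=> HS; lra.
Qed.
End H.
Section K.
Variables (R : rcfType) (m mP mW : nat).
Variable eta : 'I_m -> {ffun 'I_mW -> bool} * 'I_mP.+1 -> R.
Hypothesis Heta : left_stochastic eta.

Let p : R := 2 ^+ mW.
Let hp : 0 < p. Proof. by rewrite /p exprn_gt0. Qed.

Lemma sumf2 (u : 'rV[R]_mW) :
  \sum_(x : {ffun 'I_mW -> bool}) (\sum_j u 0 j * pm1 R (x j)) ^+ 2
  = p * \sum_j u 0 j ^+ 2.
Proof.
transitivity (\sum_j \sum_k u 0 j * u 0 k *
   \sum_(x : {ffun 'I_mW -> bool}) pm1 R (x j) * pm1 R (x k)).
  under eq_bigr do rewrite expr2 mulr_suml.
  rewrite exchange_big; apply: eq_bigr => j _.
  under eq_bigr do rewrite mulr_sumr.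
  rewrite exchange_big; apply: eq_bigr => k _.
  by rewrite mulr_sumr; apply: eq_bigr => x _; ring.
rewrite mulr_sumr; apply: eq_bigr => j _.
under eq_bigr do rewrite orth.
rewrite (bigD1 j) //= big1 ?addr0 ?eqxx; first (rewrite mul1r /p; ring).
by move=> k /negbTE; rewrite eq_sym => ->; rewrite mul0r mulr0.
Qed.

Lemma keyE (u : 'rV[R]_mW) :
  \sum_i (\sum_j u 0 j * Emx eta i j) ^+ 2 <= \sum_j u 0 j ^+ 2.
Proof.
have [e0 e1] := Heta.
pose N s := \sum_(x : {ffun 'I_mW -> bool}) eta s (x, ord0).
pose f (x : {ffun 'I_mW -> bool}) := \sum_j u 0 j * pm1 R (x j).
pose g s := p^-1 * \sum_x eta s (x, ord0) * f x ^+ 2.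
have g0 s : 0 <= g s.
  apply: mulr_ge0; first by rewrite invr_ge0 ltW.
  by apply: sumr_ge0 => x _; apply: mulr_ge0 => //; apply: sqr_ge0.
have step i : (\sum_j u 0 j * Emx eta i j) ^+ 2 <= g (enum_val i).
  set s := enum_val i.
  have Npos : 0 < N s.
    by have := enum_valP i; rewrite inE.
  have -> : \sum_j u 0 j * Emx eta i j =
      (Num.sqrt p)^-1 / Num.sqrt (N s) * \sum_x eta s (x, ord0) * f x.
    have -> : \sum_x eta s (x, ord0) * f x =
        \sum_j u 0 j * \sum_(x : {ffun 'I_mW -> bool}) pm1 R (x j) * eta s (x, ord0).
      under eq_bigr do rewrite mulr_sumr.
      rewrite exchange_big; apply: eq_bigr => j _.
      by rewrite mulr_sumr; apply: eq_bigr => x _; ring.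
    rewrite mulr_sumr; apply: eq_bigr => j _; rewrite mxE /=.
    rewrite -/s -/(N s) /p; ring.
  have -> : ((Num.sqrt p)^-1 / Num.sqrt (N s) * \sum_x eta s (x, ord0) * f x) ^+ 2
      = p^-1 * ((\sum_x eta s (x, ord0) * f x) ^+ 2 / N s).
    by rewrite !exprMn !exprVn !sqr_sqrtr ?(ltW hp) ?(ltW Npos) //; ring.
  apply: ler_wpM2l; first by rewrite invr_ge0 ltW.
  exact: cs_weighted.
apply: (le_trans (ler_sum _ (fun i _ => step i))).
rewrite -(big_enum_val (fun s => g s)) /=.
apply: (@le_trans _ _ (\sum_s g s)).
  by rewrite [X in _ <= X](bigID (mem (SW eta))) /= lerDl sumr_ge0.
rewrite /g -mulr_sumr exchange_big /=.
have -> : \sum_x \sum_(s < m) eta s (x, ord0) * f x ^+ 2 = \sum_x f x ^+ 2.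
  apply: eq_bigr => x _; by rewrite -mulr_suml e1 mul1r.
rewrite sumf2 mulrA mulVf ?mul1r //; exact: lt0r_neq0.
Qed.
End K.

Theorem lemma1 (R : rcfType) (m mP mW : nat)
  (hm : (0 < m)%N) (hP : (0 < mP)%N) (hW : (0 < mW)%N)
  (eta : 'I_m -> {ffun 'I_mW -> bool} * 'I_mP.+1 -> R)
  (Heta : left_stochastic eta) :
  (forall (s : 'I_m) (mu : 'I_mP.+1), s \in SP eta -> (0 < mu)%N ->
      0 <= etabar eta s mu <= 1)
  /\ (forall mu : 'I_mP.+1, (0 < mu)%N -> \sum_(s in SP eta) etabar eta s mu <= 1)
  /\ (forall sigma : R, singular_value (Emx eta) sigma -> 0 <= sigma <= 1).
Proof.
have [e0 e1] := Heta.
pose p : R := 2 ^+ mW.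
have hp : 0 < p by rewrite /p exprn_gt0.
have pV : p^-1 * p = 1 by rewrite mulVf // lt0r_neq0.
have cardx : \sum_(x : {ffun 'I_mW -> bool}) (1 : R) = p.
  by rewrite sumr_const card_ffun card_bool card_ord natrX.
have col mu : \sum_s etabar eta s mu = 1.
  rewrite /etabar -mulr_sumr exchange_big /=.
  under eq_bigr do rewrite e1.
  by rewrite cardx.
have eb0 s mu : 0 <= etabar eta s mu.
  apply: mulr_ge0; first by rewrite invr_ge0 ltW.
  by apply: sumr_ge0.
split; [|split].
- move=> s mu _ _; rewrite eb0 /=.
  rewrite -(col mu) (bigD1 s) //= lerDl.
  by apply: sumr_ge0.
- move=> mu _; rewrite -(col mu).
  by rewrite [X in _ <= X](bigID (mem (SP eta))) /= lerDl sumr_ge0.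
move=> sigma [s0 /eigenvalueP [u Hu u0]].
rewrite s0 /=.
set E := Emx eta in Hu *.
set S := \sum_j u 0 j ^+ 2.
have H1 : (u *m (E^T *m E) *m u^T) 0 0 = sigma ^+ 2 * S.
  rewrite Hu -scalemxAl mxE; congr (_ * _); rewrite mxE; apply: eq_bigr => j _.
  by rewrite mxE expr2.
have H2 : (u *m (E^T *m E) *m u^T) 0 0 = \sum_i (\sum_j u 0 j * E i j) ^+ 2.
  rewrite mulmxA -mulmxA mxE; apply: eq_bigr => i _.
  rewrite !mxE expr2; congr (_ * _); apply: eq_bigr => j _; rewrite !mxE //.
  by rewrite mulrC.
have K := @keyE R m mP mW eta Heta u.
rewrite -/E -H2 H1 in K.
have Spos : 0 < S.
  rewrite lt_def sumr_ge0 ?andbT; last by move=> j _; apply: sqr_ge0.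
  apply/negP => /eqP /psumr_eq0P H.
  move/negP: u0; apply; apply/eqP/matrixP => i j.
  rewrite (ord1 i) mxE.
  by apply/eqP; rewrite -sqrf_eq0; apply/eqP; apply: H => // k _; apply: sqr_ge0.
have K2 : sigma ^+ 2 <= 1 by rewrite -(ler_pM2r Spos) mul1r.
by rewrite -(expr_le1 (n:=2)).
Qed.
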